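(* Let $g$ be an even $C^1$ function near $0\in\mathbb{C}$ which is homogeneous of degree $m>1$ (i.e. $g(tz)=t^m g(z)$ for all $t>0$), and suppose $g$ satisfies the polynomial condition with respect to an odd polynomial $p=p_{2s-1}+p_{2s+1}+\cdots+p_{2n-1}$, where each $p_k$ is a homogeneous holomorphic polynomial of degree $k$ and $p_{2s-1}\neq 0$. Then $p_{2s-1}$ is complex-symmetric, and $$\operatorname{Im}\Bigl(\frac{\partial p_{2s-1}}{\partial\zeta_2}(z,\bar z)\cdot g(z)\Bigr)\ge 0\quad\text{for all } z\in\Gamma,$$ where $\Gamma$ is the unit circle.
   Context: Polynomial condition: let $g$ be an even $C^1$ function defined near $0\in\mathbb{C}$ with $g(z)=o(z)$ as $z\to0$. We say $g$ satisfies the polynomial condition with respect to a holomorphic polynomial $p(\zeta_1,\zeta_2)$ if for every $C^1$ function $R$ defined near $0$ with $R(z)=o(g(z))$ as $z\to0$, both $\operatorname{Im} p(z,\bar z+g(z)+R(z))>0$ and $\operatorname{Im} p(z,\bar z-g(z)+R(z))<0$ hold for all $z\neq0$ sufficiently close to $0$. A homogeneous polynomial $q(\zeta_1,\zeta_2)=\sum_{k=0}^{d}a_k\zeta_1^k\zeta_2^{d-k}$ of degree $d$ is called complex-symmetric if $a_k=\overline{a_{d-k}}$ for all $k=0,\dots,d$ (equivalently, $q(z,\bar z)$ is real for all $z\in\mathbb{C}$). *)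

(* Defs.v *)
From Stdlib Require Import Reals.
From Coquelicot Require Import Coquelicot.
Open Scope R_scope.

Fixpoint Csum (n : nat) (f : nat -> C) : C :=
  match n with
  | O => RtoC 0
  | S n' => Cplus (Csum n' f) (f n')
  end.

Definition homp (d : nat) (a : nat -> C) (z1 z2 : C) : C :=
  Csum (S d) (fun k => Cmult (Cmult (a k) (Cpow z1 k)) (Cpow z2 (d - k)%nat)).

(* Its partial derivative with respect to the second variable:
   dq/dz2 (z1,z2) = sum_{k=0}^{d-1} (d-k) a_k z1^k z2^(d-k-1). *)
Definition homp_d2 (d : nat) (a : nat -> C) (z1 z2 : C) : C :=
  Csum d (fun k => Cmult (Cmult (Cmult (RtoC (INR (d - k)%nat)) (a k)) (Cpow z1 k))
                         (Cpow z2 (d - k - 1)%nat)).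

Definition complex_symmetric (d : nat) (a : nat -> C) : Prop :=
  forall k : nat, (k <= d)%nat -> a k = Cconj (a (d - k)%nat).

(* Odd polynomial p = p_{2s-1} + p_{2s+1} + ... + p_{2n-1}, where p_{2j-1} is the
   homogeneous polynomial of degree 2j-1 with coefficients c j. *)
Definition oddpoly (s n : nat) (c : nat -> nat -> C) (z1 z2 : C) : C :=
  Csum (S n - s)%nat (fun i => homp (2 * (s + i) - 1)%nat (c (s + i)%nat) z1 z2).

(* f is C^1 (in the real sense, C = R^2) on a neighbourhood of 0: on some disc
   |z| < r it is real-differentiable with differential
   h |-> Re h * fx z + Im h * fy z, and the partial derivatives fx, fy are
   continuous there. *)
Definition C1_near0 (f : C -> C) : Prop :=
  exists r : R, 0 < r /\ exists fx fy : C -> C,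
    forall z : C, Cmod z < r ->
      (forall eps : R, 0 < eps -> exists delta : R, 0 < delta /\
         forall h : C, Cmod h < delta ->
           Cmod (Cminus (Cminus (f (Cplus z h)) (f z))
                        (Cplus (Cmult (RtoC (Re h)) (fx z)) (Cmult (RtoC (Im h)) (fy z))))
           <= eps * Cmod h) /\
      (forall eps : R, 0 < eps -> exists delta : R, 0 < delta /\
         forall w : C, Cmod (Cminus w z) < delta ->
           Cmod (Cminus (fx w) (fx z)) < eps /\ Cmod (Cminus (fy w) (fy z)) < eps).

Definition little_o0 (f h : C -> C) : Prop :=
  forall eps : R, 0 < eps -> exists delta : R, 0 < delta /\
    forall z : C, 0 < Cmod z < delta -> Cmod (f z) <= eps * Cmod (h z).

Definition even_fun (g : C -> C) : Prop := forall z : C, g (Copp z) = g z.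

Definition homogeneous_deg (g : C -> C) (m : R) : Prop :=
  forall (t : R) (z : C), 0 < t -> g (Cmult (RtoC t) z) = Cmult (RtoC (Rpower t m)) (g z).

Definition polynomial_condition (g : C -> C) (p : C -> C -> C) : Prop :=
  little_o0 g (fun z => z) /\
  forall Rf : C -> C, C1_near0 Rf -> little_o0 Rf g ->
    exists delta : R, 0 < delta /\
      forall z : C, 0 < Cmod z < delta ->
        0 < Im (p z (Cplus (Cplus (Cconj z) (g z)) (Rf z))) /\
        Im (p z (Cplus (Cminus (Cconj z) (g z)) (Rf z))) < 0.

(* Main.v *)
Require Import Defs.
From Stdlib Require Import Reals Lra Lia.
From Coquelicot Require Import Coquelicot.
Open Scope R_scope.

Fixpoint Rsum (n : nat) (f : nat -> R) : R :=
  match n with O => 0 | S n' => Rsum n' f + f n' end.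

Lemma Csum_ext N f g : (forall k, (k < N)%nat -> f k = g k) -> Csum N f = Csum N g.
Proof. induction N; intros H; simpl; auto. rewrite IHN; [|intros; apply H; lia]. rewrite H; auto. Qed.

Lemma Csum_plus N f g : Csum N (fun k => Cplus (f k) (g k)) = Cplus (Csum N f) (Csum N g).
Proof. induction N; simpl. ring. rewrite IHN; ring. Qed.

Lemma Csum_scal N c f : Csum N (fun k => Cmult c (f k)) = Cmult c (Csum N f).
Proof. induction N; simpl. ring. rewrite IHN; ring. Qed.

Lemma Csum_front N f : Csum (S N) f = Cplus (f O) (Csum N (fun k => f (S k))).
Proof. induction N; simpl. simpl; ring. simpl in IHN. rewrite IHN. ring. Qed.

Lemma Csum_zero N f : (forall k, (k < N)%nat -> f k = RtoC 0) -> Csum N f = RtoC 0.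
Proof. induction N; intros H; simpl; auto. rewrite IHN, H; try lia. ring. intros; apply H; lia. Qed.

Lemma Csum_bound N f b : (forall k, (k < N)%nat -> Cmod (f k) <= b k) -> Cmod (Csum N f) <= Rsum N b.
Proof. induction N; intros H; simpl. rewrite Cmod_0; lra.
  eapply Rle_trans. apply Cmod_triangle. apply Rplus_le_compat. apply IHN; intros; apply H; lia. apply H; lia. Qed.

Lemma Rsum_nonneg N b : (forall k, (k < N)%nat -> 0 <= b k) -> 0 <= Rsum N b.
Proof. induction N; intros H; simpl. lra. assert (0 <= b N) by (apply H; lia).
  assert (0 <= Rsum N b) by (apply IHN; intros; apply H; lia). lra. Qed.

Lemma Rsum_scal N c b : Rsum N (fun k => c * b k) = c * Rsum N b.
Proof. induction N; simpl. ring. rewrite IHN; ring. Qed.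

Lemma Rsum_le N a b : (forall k, (k < N)%nat -> a k <= b k) -> Rsum N a <= Rsum N b.
Proof. induction N; intros H; simpl. lra. apply Rplus_le_compat. apply IHN; intros; apply H; lia. apply H; lia. Qed.

Lemma Csum_swap N M (f : nat -> nat -> C) :
  Csum N (fun j => Csum M (fun k => f j k)) = Csum M (fun k => Csum N (fun j => f j k)).
Proof. induction N; simpl. symmetry; apply Csum_zero; auto. rewrite IHN, <- Csum_plus. auto. Qed.

Lemma Csum_conj N f : Cconj (Csum N f) = Csum N (fun k => Cconj (f k)).
Proof. induction N; simpl. apply injective_projections; simpl; lra. rewrite Cplus_conj, IHN; auto. Qed.

Lemma Csum_rev d f : Csum (S d) f = Csum (S d) (fun k => f (d - k)%nat).
Proof. induction d. simpl. auto.
  rewrite (Csum_front (S d) (fun k => f (S d - k)%nat)). replace (S d - 0)%nat with (S d) by lia.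
  change (Csum (S (S d)) f) with (Cplus (Csum (S d) f) (f (S d))).
  rewrite IHd. rewrite Cplus_comm. reflexivity. Qed.

Lemma Csum_delta d l (v : C) : (l <= d)%nat ->
  Csum (S d) (fun k => if Nat.eqb k l then v else RtoC 0) = v.
Proof. intros Hl. induction d.
  - assert (l = 0%nat) by lia. subst. simpl. ring.
  - destruct (Nat.eq_dec l (S d)).
    + subst. change (Csum (S (S d)) ?f) with (Cplus (Csum (S d) f) (f (S d))).
      rewrite Csum_zero. rewrite Nat.eqb_refl. ring. intros k Hk. destruct (Nat.eqb_spec k (S d)); auto; lia.
    + change (Csum (S (S d)) ?f) with (Cplus (Csum (S d) f) (f (S d))). rewrite IHd by lia.
      destruct (Nat.eqb_spec (S d) l); [lia|]. ring.
Qed.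

Lemma Im_le x : Rabs (Im x) <= Cmod x.
Proof. eapply Rle_trans; [|apply Rmax_Cmod]. apply Rmax_r. Qed.

Lemma powle1 x n : 0 <= x <= 1 -> x ^ n <= 1.
Proof. intros H; induction n; simpl. lra. assert (0 <= x ^ n) by (apply pow_le; lra). nra. Qed.

Fixpoint Kp (M : R) (n : nat) : R :=
  match n with O => 0 | S n' => (1 + M) * Kp M n' + INR n' end.

Lemma Kp_nonneg M n : 0 <= M -> 0 <= Kp M n.
Proof. intros HM; induction n; simpl. lra. assert (0 <= INR n) by apply pos_INR. nra. Qed.

Definition Epow (z h : C) (n : nat) : C :=
  Cminus (Cminus (Cpow (Cplus z h) n) (Cpow z n)) (Cmult (Cmult (RtoC (INR n)) h) (Cpow z (n - 1))).

Lemma Epow_S z h n : Epow z h (S n) = Cplus (Cmult (Cplus z h) (Epow z h n))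
   (Cmult (Cmult (RtoC (INR n)) (Cmult h h)) (Cpow z (n - 1))).
Proof. unfold Epow. destruct n.
  - simpl. ring.
  - replace (S (S n) - 1)%nat with (S n) by lia. replace (S n - 1)%nat with n by lia.
    rewrite !S_INR, !RtoC_plus. simpl. ring.
Qed.

Lemma Epow_bound M z h n : Cmod z <= 1 -> Cmod h <= M ->
  Cmod (Epow z h n) <= Kp M n * Cmod h ^ 2.
Proof. intros Hz Hh. assert (HM : 0 <= M) by (pose proof (Cmod_ge_0 h); lra).
  induction n.
  - unfold Epow. simpl. replace (Cminus (Cminus 1 1) (Cmult (Cmult (RtoC 0) h) 1)) with (RtoC 0) by ring.
    rewrite Cmod_0. lra.
  - rewrite Epow_S. eapply Rle_trans. apply Cmod_triangle. rewrite !Cmod_mult, Cmod_R, Cmod_pow.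
    rewrite Rabs_right by (apply Rle_ge, pos_INR).
    assert (Cmod (Cplus z h) <= 1 + M) by (eapply Rle_trans; [apply Cmod_triangle|lra]).
    assert (Cmod z ^ (n-1) <= 1) by (apply powle1; split; [apply Cmod_ge_0|lra]).
    assert (0 <= Cmod z ^ (n-1)) by (apply pow_le, Cmod_ge_0).
    assert (0 <= Kp M n) by (apply Kp_nonneg; auto).
    assert (0 <= Cmod h) by apply Cmod_ge_0. assert (0 <= INR n) by apply pos_INR.
    simpl Kp. assert (0 <= Cmod h ^ 2) by (apply pow_le; lra).
    assert (0 <= Cmod (Epow z h n)) by apply Cmod_ge_0.
    assert (Cmod (Cplus z h) * Cmod (Epow z h n) <= (1 + M) * (Kp M n * Cmod h ^ 2)).
    { apply Rmult_le_compat; try lra; apply Cmod_ge_0. }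
    assert (INR n * (Cmod h * Cmod h) * Cmod z ^ (n - 1) <= INR n * (Cmod h * Cmod h)).
    { rewrite <- (Rmult_1_r (INR n * (Cmod h * Cmod h))) at 2. apply Rmult_le_compat_l; auto. nra. }
    simpl. nra.
Qed.

Lemma Csum_minus N f g : Csum N (fun k => Cminus (f k) (g k)) = Cminus (Csum N f) (Csum N g).
Proof. induction N; simpl. ring. rewrite IHN; ring. Qed.

Definition Khomp (d : nat) (a : nat -> C) (M : R) : R :=
  Rsum (S d) (fun k => Cmod (a k) * Kp M (d - k)).

Lemma homp_d2_ext d a z1 z2 : homp_d2 d a z1 z2 =
  Csum (S d) (fun k => Cmult (Cmult (Cmult (RtoC (INR (d - k)%nat)) (a k)) (Cpow z1 k))
                         (Cpow z2 (d - k - 1)%nat)).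
Proof. unfold homp_d2. simpl. replace (d - d)%nat with 0%nat by lia. simpl. ring. Qed.

Lemma homp_exp d a M z1 z2 h : Cmod z1 <= 1 -> Cmod z2 <= 1 -> Cmod h <= M ->
  Cmod (Cminus (Cminus (homp d a z1 (Cplus z2 h)) (homp d a z1 z2)) (Cmult h (homp_d2 d a z1 z2)))
  <= Khomp d a M * Cmod h ^ 2.
Proof. intros H1 H2 H3. rewrite homp_d2_ext. unfold homp. rewrite <- Csum_scal, <- !Csum_minus.
  unfold Khomp. rewrite Rmult_comm, <- Rsum_scal. apply Csum_bound. intros k Hk.
  replace (Cminus _ _) with (Cmult (Cmult (a k) (Cpow z1 k)) (Epow z2 h (d - k))).
  2:{ unfold Epow. ring. }
  rewrite !Cmod_mult, Cmod_pow.
  assert (Cmod z1 ^ k <= 1) by (apply powle1; split; [apply Cmod_ge_0|lra]).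
  assert (0 <= Cmod z1 ^ k) by (apply pow_le, Cmod_ge_0).
  pose proof (Epow_bound M z2 h (d - k) H2 H3).
  assert (0 <= Cmod (a k)) by apply Cmod_ge_0.
  assert (0 <= Cmod (Epow z2 h (d-k))) by apply Cmod_ge_0.
  assert (Cmod (a k) * Cmod z1 ^ k <= Cmod (a k)) by nra.
  assert (0 <= Cmod (a k) * Cmod z1 ^ k) by nra.
  apply Rle_trans with (Cmod (a k) * Cmod (Epow z2 h (d - k))).
  apply Rmult_le_compat_r; auto.
  apply Rle_trans with (Cmod (a k) * (Kp M (d - k) * Cmod h ^ 2)).
  apply Rmult_le_compat_l; auto. right; ring.
Qed.

Lemma homp_scale d a (t z1 z2 : C) : homp d a (Cmult t z1) (Cmult t z2) = Cmult (Cpow t d) (homp d a z1 z2).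
Proof. unfold homp. rewrite <- Csum_scal. apply Csum_ext. intros k Hk.
  rewrite !Cpow_mult_l. replace d with (k + (d - k))%nat at 3 by lia. rewrite Cpow_add_r. ring. Qed.

Lemma pow_mono_le t a b : 0 <= t <= 1 -> (a <= b)%nat -> t ^ b <= t ^ a.
Proof. intros Ht Hab. replace b with (a + (b - a))%nat by lia. rewrite pow_add.
  assert (t ^ (b - a) <= 1) by (apply powle1; lra). assert (0 <= t ^ a) by (apply pow_le; lra).
  nra. Qed.

Lemma rest_bound N (t : R) D0 (D : nat -> nat) (X : nat -> C) (Y : nat -> R) :
  0 <= t <= 1 -> (forall j, (j < N)%nat -> (D0 + 2 <= D j)%nat /\ Cmod (X j) <= Y j) ->
  Cmod (Csum N (fun j => Cmult (RtoC (t ^ D j)) (X j))) <= t ^ (D0 + 2) * Rsum N Y.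
Proof. intros Ht H. rewrite <- Rsum_scal. apply Csum_bound. intros k Hk.
  destruct (H k Hk) as [H1 H2]. rewrite Cmod_mult, Cmod_R.
  assert (0 <= t ^ D k) by (apply pow_le; lra). rewrite Rabs_right by lra.
  pose proof (pow_mono_le t _ _ Ht H1). assert (0 <= Cmod (X k)) by apply Cmod_ge_0.
  apply Rmult_le_compat; lra. Qed.

Lemma oddpoly_scaled s n c (t : R) z0 v : (s <= n)%nat ->
  oddpoly s n c (Cmult (RtoC t) z0) (Cmult (RtoC t) v) =
  Cplus (Cmult (RtoC (t ^ (2 * s - 1))) (homp (2 * s - 1) (c s) z0 v))
    (Csum (n - s) (fun j => Cmult (RtoC (t ^ (2 * (s + S j) - 1)))
                                   (homp (2 * (s + S j) - 1) (c (s + S j)%nat) z0 v))).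
Proof. intros Hsn. unfold oddpoly. replace (S n - s)%nat with (S (n - s)) by lia.
  rewrite Csum_front. rewrite Nat.add_0_r. rewrite homp_scale, RtoC_pow. f_equal.
  apply Csum_ext. intros. rewrite homp_scale, RtoC_pow. auto. Qed.

Lemma homp_exp' d a M z1 z2 h : Cmod z1 <= 1 -> Cmod z2 <= 1 -> Cmod h <= M ->
  exists e, homp d a z1 (Cplus z2 h) = Cplus (Cplus (homp d a z1 z2) (Cmult h (homp_d2 d a z1 z2))) e
   /\ Cmod e <= Khomp d a M * Cmod h ^ 2.
Proof. intros. exists (Cminus (Cminus (homp d a z1 (Cplus z2 h)) (homp d a z1 z2)) (Cmult h (homp_d2 d a z1 z2))).
  split; [ring|apply homp_exp; auto]. Qed.

Lemma Khomp_nonneg d a M : 0 <= M -> 0 <= Khomp d a M.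
Proof. intros. unfold Khomp. apply Rsum_nonneg. intros. pose proof (Kp_nonneg M (d-k) H).
  pose proof (Cmod_ge_0 (a k)). nra. Qed.

Lemma est_a s n c z0 M : Cmod z0 = 1 -> 0 <= M -> (1 <= s)%nat -> (s <= n)%nat ->
  exists C1, 0 <= C1 /\ forall (t : R) h, 0 <= t <= 1 -> Cmod h <= M ->
  Cmod (Cminus (oddpoly s n c (Cmult (RtoC t) z0) (Cmult (RtoC t) (Cplus (Cconj z0) h)))
     (Cmult (RtoC (t ^ (2 * s - 1))) (Cplus (homp (2 * s - 1) (c s) z0 (Cconj z0))
          (Cmult h (homp_d2 (2 * s - 1) (c s) z0 (Cconj z0))))))
  <= t ^ (2 * s - 1) * (Khomp (2 * s - 1) (c s) M * Cmod h ^ 2 + t ^ 2 * C1).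
Proof. intros Hz HM Hs1 Hsn.
  set (u0 := Cconj z0). assert (Hu : Cmod u0 = 1) by (unfold u0; rewrite Cmod_conj; auto).
  set (Y := fun j => Cmod (homp (2 * (s + S j) - 1) (c (s + S j)%nat) z0 u0)
           + M * Cmod (homp_d2 (2 * (s + S j) - 1) (c (s + S j)%nat) z0 u0)
           + Khomp (2 * (s + S j) - 1) (c (s + S j)%nat) M * M ^ 2).
  exists (Rsum (n - s) Y). split.
  { apply Rsum_nonneg. intros. unfold Y. pose proof (Cmod_ge_0 (homp (2 * (s + S k) - 1) (c (s + S k)%nat) z0 u0)).
    pose proof (Cmod_ge_0 (homp_d2 (2 * (s + S k) - 1) (c (s + S k)%nat) z0 u0)).
    pose proof (Khomp_nonneg (2 * (s + S k) - 1) (c (s + S k)%nat) M HM). assert (0 <= M^2) by (apply pow_le; lra). nra. }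
  intros t h Ht Hh. rewrite oddpoly_scaled by auto.
  destruct (homp_exp' (2 * s - 1) (c s) M z0 u0 h) as [e [He1 He2]]; try lra.
  rewrite He1.
  replace (Cminus _ _) with (Cplus (Cmult (RtoC (t ^ (2 * s - 1))) e) (Csum (n - s)
       (fun j : nat => Cmult (RtoC (t ^ (2 * (s + S j) - 1)))
          (homp (2 * (s + S j) - 1) (c (s + S j)%nat) z0 (Cplus u0 h))))) by ring.
  eapply Rle_trans. apply Cmod_triangle. rewrite Cmod_mult, Cmod_R.
  assert (0 <= t ^ (2 * s - 1)) by (apply pow_le; lra). rewrite Rabs_right by lra.
  rewrite Rmult_plus_distr_l. apply Rplus_le_compat. apply Rmult_le_compat_l; auto.
  replace (t ^ (2 * s - 1) * (t ^ 2 * Rsum (n - s) Y)) with (t ^ (2 * s - 1 + 2) * Rsum (n - s) Y)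
    by (rewrite pow_add; ring).
  apply rest_bound; auto. intros j Hj. split. lia.
  destruct (homp_exp' (2 * (s + S j) - 1) (c (s + S j)%nat) M z0 u0 h) as [e' [He1' He2']]; try lra.
  rewrite He1'. unfold Y. eapply Rle_trans. apply Cmod_triangle. eapply Rle_trans. apply Rplus_le_compat_l. apply He2'.
  eapply Rle_trans. apply Rplus_le_compat_r. apply Cmod_triangle.
  rewrite Cmod_mult.
  pose proof (Cmod_ge_0 (homp_d2 (2 * (s + S j) - 1) (c (s + S j)%nat) z0 u0)).
  pose proof (Khomp_nonneg (2 * (s + S j) - 1) (c (s + S j)%nat) M HM).
  pose proof (Cmod_ge_0 h).
  assert (Cmod h ^ 2 <= M ^ 2) by (apply pow_incr; lra).
  assert (Cmod h * Cmod (homp_d2 (2 * (s + S j) - 1) (c (s + S j)%nat) z0 u0) <= M * Cmod (homp_d2 (2 * (s + S j) - 1) (c (s + S j)%nat) z0 u0)) by (apply Rmult_le_compat_r; lra).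
  assert (Khomp (2 * (s + S j) - 1) (c (s + S j)%nat) M * Cmod h ^ 2 <= Khomp (2 * (s + S j) - 1) (c (s + S j)%nat) M * M ^ 2) by (apply Rmult_le_compat_l; lra).
  lra.
Qed.

Lemma est_b s n c z0 M : Cmod z0 = 1 -> 0 <= M -> (1 <= s)%nat -> (s <= n)%nat ->
  exists C2, 0 <= C2 /\ forall (t : R) h, 0 <= t <= 1 -> Cmod h <= M ->
  Cmod (Cminus (Cminus (oddpoly s n c (Cmult (RtoC t) z0) (Cmult (RtoC t) (Cplus (Cconj z0) h)))
                       (oddpoly s n c (Cmult (RtoC t) z0) (Cmult (RtoC t) (Cplus (Cconj z0) (Copp h)))))
     (Cmult (RtoC (t ^ (2 * s - 1))) (Cmult (Cmult (RtoC 2) h) (homp_d2 (2 * s - 1) (c s) z0 (Cconj z0)))))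
  <= t ^ (2 * s - 1) * (2 * Khomp (2 * s - 1) (c s) M * Cmod h ^ 2 + t ^ 2 * (Cmod h * C2)).
Proof. intros Hz HM Hs1 Hsn.
  set (u0 := Cconj z0). assert (Hu : Cmod u0 = 1) by (unfold u0; rewrite Cmod_conj; auto).
  set (Y := fun j => 2 * Cmod (homp_d2 (2 * (s + S j) - 1) (c (s + S j)%nat) z0 u0)
           + 2 * Khomp (2 * (s + S j) - 1) (c (s + S j)%nat) M * M).
  exists (Rsum (n - s) Y). split.
  { apply Rsum_nonneg. intros. unfold Y.
    pose proof (Cmod_ge_0 (homp_d2 (2 * (s + S k) - 1) (c (s + S k)%nat) z0 u0)).
    pose proof (Khomp_nonneg (2 * (s + S k) - 1) (c (s + S k)%nat) M HM). nra. }
  intros t h Ht Hh. rewrite !oddpoly_scaled by auto.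
  assert (Hh' : Cmod (Copp h) <= M) by (rewrite Cmod_opp; auto).
  destruct (homp_exp' (2 * s - 1) (c s) M z0 u0 h) as [e [He1 He2]]; try lra.
  destruct (homp_exp' (2 * s - 1) (c s) M z0 u0 (Copp h)) as [f [Hf1 Hf2]]; try lra.
  rewrite Cmod_opp in Hf2.
  rewrite He1, Hf1.
  replace (Cminus _ _) with (Cplus (Cmult (RtoC (t ^ (2 * s - 1))) (Cminus e f)) (Csum (n - s)
       (fun j : nat => Cmult (RtoC (t ^ (2 * (s + S j) - 1)))
          (Cminus (homp (2 * (s + S j) - 1) (c (s + S j)%nat) z0 (Cplus u0 h))
                  (homp (2 * (s + S j) - 1) (c (s + S j)%nat) z0 (Cplus u0 (Copp h))))))).
  2:{ rewrite (Csum_ext _ _ (fun j => Cminus (Cmult (RtoC (t ^ (2 * (s + S j) - 1)))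
          (homp (2 * (s + S j) - 1) (c (s + S j)%nat) z0 (Cplus u0 h))) (Cmult (RtoC (t ^ (2 * (s + S j) - 1)))
          (homp (2 * (s + S j) - 1) (c (s + S j)%nat) z0 (Cplus u0 (Copp h)))))) by (intros; ring).
      rewrite Csum_minus. ring. }
  eapply Rle_trans. apply Cmod_triangle. rewrite Cmod_mult, Cmod_R.
  assert (0 <= t ^ (2 * s - 1)) by (apply pow_le; lra). rewrite Rabs_right by lra.
  rewrite Rmult_plus_distr_l. apply Rplus_le_compat. apply Rmult_le_compat_l; auto.
  { unfold Cminus. eapply Rle_trans. apply Cmod_triangle. rewrite Cmod_opp. lra. }
  replace (t ^ (2 * s - 1) * (t ^ 2 * (Cmod h * Rsum (n - s) Y))) with (t ^ (2 * s - 1 + 2) * Rsum (n - s) (fun j => Cmod h * Y j))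
    by (rewrite Rsum_scal, pow_add; ring).
  apply rest_bound; auto. intros j Hj. split. lia.
  destruct (homp_exp' (2 * (s + S j) - 1) (c (s + S j)%nat) M z0 u0 h) as [e' [He1' He2']]; try lra.
  destruct (homp_exp' (2 * (s + S j) - 1) (c (s + S j)%nat) M z0 u0 (Copp h)) as [f' [Hf1' Hf2']]; try lra.
  rewrite Cmod_opp in Hf2'.
  rewrite He1', Hf1'. unfold Y.
  replace (Cminus _ _) with (Cplus (Cmult (Cmult (RtoC 2) h) (homp_d2 (2 * (s + S j) - 1) (c (s + S j)%nat) z0 u0)) (Cminus e' f')) by ring.
  eapply Rle_trans. apply Cmod_triangle. rewrite !Cmod_mult, Cmod_R, Rabs_right by lra.
  unfold Cminus. eapply Rle_trans. apply Rplus_le_compat_l. apply Cmod_triangle. rewrite Cmod_opp.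
  pose proof (Cmod_ge_0 (homp_d2 (2 * (s + S j) - 1) (c (s + S j)%nat) z0 u0)).
  pose proof (Khomp_nonneg (2 * (s + S j) - 1) (c (s + S j)%nat) M HM).
  pose proof (Cmod_ge_0 h).
  assert (Khomp (2 * (s + S j) - 1) (c (s + S j)%nat) M * Cmod h ^ 2 <= Khomp (2 * (s + S j) - 1) (c (s + S j)%nat) M * M * Cmod h).
  { assert (Khomp (2 * (s + S j) - 1) (c (s + S j)%nat) M * Cmod h <= Khomp (2 * (s + S j) - 1) (c (s + S j)%nat) M * M) by (apply Rmult_le_compat_l; lra).
    nra. }
  nra.
Qed.

Lemma C1_zero : C1_near0 (fun _ => RtoC 0).
Proof. exists 1. split. lra. exists (fun _ => RtoC 0), (fun _ => RtoC 0). intros z _. split.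
  - intros eps Heps. exists 1. split. lra. intros h _.
    replace (Cminus _ _) with (RtoC 0) by ring. rewrite Cmod_0.
    pose proof (Cmod_ge_0 h). nra.
  - intros eps Heps. exists 1. split. lra. intros w _.
    replace (Cminus (RtoC 0) (RtoC 0)) with (RtoC 0) by ring. rewrite Cmod_0. lra.
Qed.

Lemma lo_zero g : little_o0 (fun _ => RtoC 0) g.
Proof. intros eps Heps. exists 1. split. lra. intros z _. rewrite Cmod_0.
  pose proof (Cmod_ge_0 (g z)). nra. Qed.

Lemma Cconj_RtoC_mult (t : R) z : Cconj (Cmult (RtoC t) z) = Cmult (RtoC t) (Cconj z).
Proof. rewrite Cmult_conj. f_equal. apply injective_projections; simpl; lra. Qed.

Lemma Cmod_tz (t : R) z : 0 <= t -> Cmod z = 1 -> Cmod (Cmult (RtoC t) z) = t.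
Proof. intros. rewrite Cmod_mult, Cmod_R, H0, Rabs_right; lra. Qed.

Lemma pc_ray g m s n c z0 : homogeneous_deg g m ->
  polynomial_condition g (oddpoly s n c) -> Cmod z0 = 1 ->
  exists delta, 0 < delta /\ forall t : R, 0 < t < delta ->
   0 < Im (oddpoly s n c (Cmult (RtoC t) z0)
            (Cmult (RtoC t) (Cplus (Cconj z0) (Cmult (RtoC (Rpower t (m - 1))) (g z0))))) /\
   Im (oddpoly s n c (Cmult (RtoC t) z0)
            (Cmult (RtoC t) (Cplus (Cconj z0) (Copp (Cmult (RtoC (Rpower t (m - 1))) (g z0)))))) < 0.
Proof. intros Hh [_ Hpc] Hz. destruct (Hpc _ C1_zero (lo_zero g)) as [delta [Hd H]].
  exists delta. split; auto. intros t Ht.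
  assert (Hm : Cmod (Cmult (RtoC t) z0) = t) by (apply Cmod_tz; lra).
  destruct (H (Cmult (RtoC t) z0)) as [H1 H2]. rewrite Hm; lra.
  rewrite Hh in H1, H2 by lra. rewrite Cconj_RtoC_mult in H1, H2.
  assert (Hp : Rpower t m = t * Rpower t (m - 1)).
  { replace m with (1 + (m - 1)) at 1 by ring. rewrite Rpower_plus, Rpower_1 by lra. auto. }
  rewrite Hp, RtoC_mult in H1, H2. split.
  - replace (Cmult (RtoC t) (Cplus (Cconj z0) (Cmult (RtoC (Rpower t (m - 1))) (g z0)))) with
      (Cplus (Cplus (Cmult (RtoC t) (Cconj z0)) (Cmult (Cmult (RtoC t) (RtoC (Rpower t (m - 1)))) (g z0))) (RtoC 0)) by ring. auto.
  - replace (Cmult (RtoC t) (Cplus (Cconj z0) (Copp (Cmult (RtoC (Rpower t (m - 1))) (g z0))))) with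
      (Cplus (Cminus (Cmult (RtoC t) (Cconj z0)) (Cmult (Cmult (RtoC t) (RtoC (Rpower t (m - 1)))) (g z0))) (RtoC 0)) by ring. auto.
Qed.

Lemma Im_minus a b : Im (Cminus a b) = Im a - Im b.
Proof. destruct a, b. unfold Im, Cminus, Cplus, Copp. simpl. ring. Qed.
Lemma Im_plus a b : Im (Cplus a b) = Im a + Im b.
Proof. destruct a, b. unfold Im, Cplus. simpl. ring. Qed.

Lemma Rpower_pos t y : 0 < Rpower t y.
Proof. unfold Rpower. apply exp_pos. Qed.

Lemma Rpower_small m eta : 1 < m -> 0 < eta -> exists tau, 0 < tau /\
  forall t, 0 < t < tau -> Rpower t (m - 1) < eta.
Proof. intros Hm He. exists (Rpower eta (/ (m - 1))). split. apply Rpower_pos.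
  intros t Ht. replace eta with (Rpower (Rpower eta (/ (m - 1))) (m - 1)).
  apply Rlt_Rpower_l; lra.
  rewrite Rpower_mult. replace (/ (m - 1) * (m - 1)) with 1 by (field; lra). apply Rpower_1; auto. Qed.

Lemma part2 g m s n c z0 : homogeneous_deg g m -> 1 < m -> (1 <= s)%nat -> (s <= n)%nat ->
  polynomial_condition g (oddpoly s n c) -> Cmod z0 = 1 ->
  0 <= Im (Cmult (homp_d2 (2 * s - 1) (c s) z0 (Cconj z0)) (g z0)).
Proof. intros Hh Hm Hs1 Hsn Hpc Hz.
  set (w := g z0). set (Q0 := homp_d2 (2 * s - 1) (c s) z0 (Cconj z0)).
  set (A := Im (Cmult Q0 w)). destruct (Rle_or_lt 0 A) as [HA|HA]; auto. exfalso.
  set (M := Cmod w). assert (HM : 0 <= M) by apply Cmod_ge_0.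
  destruct (est_b s n c z0 M Hz HM Hs1 Hsn) as [C2 [HC2 Hest]].
  destruct (pc_ray g m s n c z0 Hh Hpc Hz) as [delta [Hd Hray]].
  set (K0 := Khomp (2 * s - 1) (c s) M). assert (HK0 : 0 <= K0) by (apply Khomp_nonneg; auto).
  set (Kq := 2 * K0 * M ^ 2). assert (HKq : 0 <= Kq) by (unfold Kq; assert (0 <= M^2) by (apply pow_le; auto); nra).
  assert (Heta : 0 < Rmin 1 (- A / (2 * Kq + 1))).
  { apply Rmin_pos. lra. apply Rdiv_lt_0_compat; lra. }
  destruct (Rpower_small m _ Hm Heta) as [tau [Htau Hsmall]].
  assert (HMC : 0 <= M * C2) by nra.
  set (T := Rmin (Rmin delta 1) (Rmin tau (- A / (2 * (M * C2) + 1)))).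
  assert (HT : 0 < T).
  { unfold T. apply Rmin_pos; apply Rmin_pos; try lra. apply Rdiv_lt_0_compat; lra. }
  set (t := T / 2).
  assert (Ht1 : t < delta /\ t < 1 /\ t < tau /\ t < - A / (2 * (M * C2) + 1)).
  { pose proof (Rmin_l (Rmin delta 1) (Rmin tau (- A / (2 * (M * C2) + 1)))).
    pose proof (Rmin_r (Rmin delta 1) (Rmin tau (- A / (2 * (M * C2) + 1)))).
    pose proof (Rmin_l delta 1). pose proof (Rmin_r delta 1).
    pose proof (Rmin_l tau (- A / (2 * (M * C2) + 1))). pose proof (Rmin_r tau (- A / (2 * (M * C2) + 1))).
    fold T in H, H0. unfold t. repeat split; lra. }
  assert (Ht0 : 0 < t) by (unfold t; lra).
  set (eps := Rpower t (m - 1)).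
  assert (He : eps < Rmin 1 (- A / (2 * Kq + 1))) by (apply Hsmall; lra).
  assert (He1 : eps < 1) by (pose proof (Rmin_l 1 (- A / (2 * Kq + 1))); lra).
  assert (He2 : eps * (2 * Kq + 1) < - A).
  { pose proof (Rmin_r 1 (- A / (2 * Kq + 1))). apply Rlt_le_trans with (- A / (2 * Kq + 1) * (2 * Kq + 1)).
    apply Rmult_lt_compat_r; lra. right; field; lra. }
  assert (Ht2 : t * (2 * (M * C2) + 1) < - A).
  { apply Rlt_le_trans with (- A / (2 * (M * C2) + 1) * (2 * (M * C2) + 1)).
    apply Rmult_lt_compat_r; lra. right; field; lra. }
  assert (He0 : 0 < eps) by apply Rpower_pos.
  set (h := Cmult (RtoC eps) w).
  assert (Hhm : Cmod h = eps * M) by (unfold h; rewrite Cmod_mult, Cmod_R, Rabs_right by lra; reflexivity).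
  destruct (Hray t) as [Hp Hn]. lra.
  specialize (Hest t h). fold eps w in Hp, Hn. fold h in Hp, Hn.
  assert (Hest' := Hest ltac:(lra) ltac:(rewrite Hhm; nra)).
  pose proof (Im_le (Cminus (Cminus (oddpoly s n c (Cmult (RtoC t) z0) (Cmult (RtoC t) (Cplus (Cconj z0) h)))
           (oddpoly s n c (Cmult (RtoC t) z0) (Cmult (RtoC t) (Cplus (Cconj z0) (Copp h)))))
        (Cmult (RtoC (t ^ (2 * s - 1))) (Cmult (Cmult (RtoC 2) h) Q0)))) as Hi.
  fold Q0 K0 in Hest'. rewrite Hhm in Hest'.
  pose proof (Rle_trans _ _ _ Hi Hest') as Hi2. clear Hi Hest'. rename Hi2 into Hi.
  rewrite !Im_minus in Hi.
  replace (Cmult (RtoC (t ^ (2 * s - 1))) (Cmult (Cmult (RtoC 2) h) Q0)) with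
    (Cmult (RtoC (t ^ (2 * s - 1) * 2 * eps)) (Cmult Q0 w)) in Hi
    by (unfold h; rewrite !RtoC_mult; ring).
  rewrite im_scal_l in Hi. fold A in Hi.
  assert (Htd : 0 < t ^ (2 * s - 1)) by (apply pow_lt; lra).
  assert (Hbig : 2 * K0 * (eps * M) ^ 2 + t ^ 2 * (eps * M * C2) <= eps * (- A)).
  { assert (eps * Kq <= - A / 2) by nra.
    assert (t ^ 2 * (M * C2) <= - A / 2).
    { assert (t ^ 2 <= t) by (simpl; nra). assert (t * (M * C2) <= - A / 2) by nra. nra. }
    unfold Kq in *. replace (2 * K0 * (eps * M) ^ 2 + t ^ 2 * (eps * M * C2)) with
      (eps * (eps * (2 * K0 * M ^ 2)) + eps * (t ^ 2 * (M * C2))) by ring. nra. }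
  assert (Hfin : t ^ (2 * s - 1) * (2 * K0 * (eps * M) ^ 2 + t ^ 2 * (eps * M * C2)) <= t ^ (2 * s - 1) * (eps * (- A))).
  { apply Rmult_le_compat_l; lra. }
  pose proof (Rle_abs (Im (oddpoly s n c (Cmult (RtoC t) z0) (Cmult (RtoC t) (Cplus (Cconj z0) h))) -
     Im (oddpoly s n c (Cmult (RtoC t) z0) (Cmult (RtoC t) (Cplus (Cconj z0) (Copp h)))) -
     t ^ (2 * s - 1) * 2 * eps * A)).
  assert (0 < t ^ (2 * s - 1) * eps) by nra.
  assert (t ^ (2 * s - 1) * eps * A < 0) by nra.
  assert (t ^ (2 * s - 1) * 2 * eps * A = 2 * (t ^ (2 * s - 1) * eps * A)) by ring.
  assert (t ^ (2 * s - 1) * (eps * - A) = - (t ^ (2 * s - 1) * eps * A)) by ring.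
  lra.
Qed.

Lemma part1a g m s n c z0 : homogeneous_deg g m -> 1 < m -> (1 <= s)%nat -> (s <= n)%nat ->
  polynomial_condition g (oddpoly s n c) -> Cmod z0 = 1 ->
  Im (homp (2 * s - 1) (c s) z0 (Cconj z0)) = 0.
Proof. intros Hh Hm Hs1 Hsn Hpc Hz.
  set (w := g z0). set (Q0 := homp_d2 (2 * s - 1) (c s) z0 (Cconj z0)).
  set (P0 := homp (2 * s - 1) (c s) z0 (Cconj z0)).
  set (B := Im P0). destruct (Req_dec B 0) as [HB|HB]; auto. exfalso.
  assert (HaB : 0 < Rabs B) by (apply Rabs_pos_lt; auto).
  set (M := Cmod w). assert (HM : 0 <= M) by apply Cmod_ge_0.
  destruct (est_a s n c z0 M Hz HM Hs1 Hsn) as [C1 [HC1 Hest]].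
  destruct (pc_ray g m s n c z0 Hh Hpc Hz) as [delta [Hd Hray]].
  set (K0 := Khomp (2 * s - 1) (c s) M). assert (HK0 : 0 <= K0) by (apply Khomp_nonneg; auto).
  set (L := M * Cmod Q0 + K0 * M ^ 2).
  assert (HL : 0 <= L) by (unfold L; pose proof (Cmod_ge_0 Q0); assert (0 <= M^2) by (apply pow_le; auto); nra).
  assert (Heta : 0 < Rmin 1 (Rabs B / (3 * L + 1))).
  { apply Rmin_pos. lra. apply Rdiv_lt_0_compat; lra. }
  destruct (Rpower_small m _ Hm Heta) as [tau [Htau Hsmall]].
  set (T := Rmin (Rmin delta 1) (Rmin tau (Rabs B / (3 * C1 + 1)))).
  assert (HT : 0 < T).
  { unfold T. apply Rmin_pos; apply Rmin_pos; try lra. apply Rdiv_lt_0_compat; lra. }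
  set (t := T / 2).
  assert (Ht1 : t < delta /\ t < 1 /\ t < tau /\ t < Rabs B / (3 * C1 + 1)).
  { pose proof (Rmin_l (Rmin delta 1) (Rmin tau (Rabs B / (3 * C1 + 1)))).
    pose proof (Rmin_r (Rmin delta 1) (Rmin tau (Rabs B / (3 * C1 + 1)))).
    pose proof (Rmin_l delta 1). pose proof (Rmin_r delta 1).
    pose proof (Rmin_l tau (Rabs B / (3 * C1 + 1))). pose proof (Rmin_r tau (Rabs B / (3 * C1 + 1))).
    fold T in H, H0. unfold t. repeat split; lra. }
  assert (Ht0 : 0 < t) by (unfold t; lra).
  set (eps := Rpower t (m - 1)).
  assert (He : eps < Rmin 1 (Rabs B / (3 * L + 1))) by (apply Hsmall; lra).
  assert (He1 : eps < 1) by (pose proof (Rmin_l 1 (Rabs B / (3 * L + 1))); lra).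
  assert (He2 : eps * (3 * L + 1) < Rabs B).
  { pose proof (Rmin_r 1 (Rabs B / (3 * L + 1))). apply Rlt_le_trans with (Rabs B / (3 * L + 1) * (3 * L + 1)).
    apply Rmult_lt_compat_r; lra. right; field; lra. }
  assert (Ht2 : t * (3 * C1 + 1) < Rabs B).
  { apply Rlt_le_trans with (Rabs B / (3 * C1 + 1) * (3 * C1 + 1)).
    apply Rmult_lt_compat_r; lra. right; field; lra. }
  assert (He0 : 0 < eps) by apply Rpower_pos.
  assert (Htd : 0 < t ^ (2 * s - 1)) by (apply pow_lt; lra).
  assert (Gen : forall h, Cmod h = eps * M ->
     Rabs (Im (oddpoly s n c (Cmult (RtoC t) z0) (Cmult (RtoC t) (Cplus (Cconj z0) h))) - t ^ (2 * s - 1) * B)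
     < t ^ (2 * s - 1) * Rabs B).
  { intros h Hhm. assert (Hest' := Hest t h ltac:(lra) ltac:(rewrite Hhm; nra)).
    pose proof (Im_le (Cminus (oddpoly s n c (Cmult (RtoC t) z0) (Cmult (RtoC t) (Cplus (Cconj z0) h)))
       (Cmult (RtoC (t ^ (2 * s - 1))) (Cplus P0 (Cmult h Q0))))) as Hi.
    fold P0 Q0 K0 in Hest'. pose proof (Rle_trans _ _ _ Hi Hest') as Hi2. clear Hi Hest'.
    rewrite Im_minus, im_scal_l, Im_plus in Hi2. fold B in Hi2.
    pose proof (Im_le (Cmult h Q0)) as Hq. rewrite Cmod_mult, Hhm in Hq.
    rewrite Hhm in Hi2.
    assert (Herr : Cmod (Cmult h Q0) + K0 * (eps * M) ^ 2 + t ^ 2 * C1 < Rabs B).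
    { rewrite Cmod_mult, Hhm. assert (eps * L < Rabs B / 3) by nra.
      assert (t ^ 2 <= t) by (simpl; nra). assert (t ^ 2 * C1 < Rabs B / 3) by nra.
      unfold L in *. assert (K0 * (eps * M) ^ 2 <= eps * (K0 * M ^ 2)).
      { replace (K0 * (eps * M) ^ 2) with (eps * (eps * (K0 * M ^ 2))) by ring.
        apply Rmult_le_compat_l. lra. assert (0 <= K0 * M ^ 2) by (assert (0 <= M^2) by (apply pow_le; auto); nra). nra. }
      pose proof (Cmod_ge_0 Q0). nra. }
    rewrite Cmod_mult, Hhm in Herr.
    set (X := Im (oddpoly s n c (Cmult (RtoC t) z0) (Cmult (RtoC t) (Cplus (Cconj z0) h)))) in *.
    set (Y := Im (Cmult h Q0)) in *.
    assert (Rabs (X - t ^ (2 * s - 1) * B) <= t ^ (2 * s - 1) * (eps * M * Cmod Q0 + K0 * (eps * M) ^ 2 + t ^ 2 * C1)).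
    { replace (X - t ^ (2 * s - 1) * B) with ((X - t ^ (2 * s - 1) * (B + Y)) + t ^ (2 * s - 1) * Y) by ring.
      eapply Rle_trans. apply Rabs_triang. rewrite Rabs_mult, (Rabs_right (t ^ _)) by lra.
      assert (t ^ (2 * s - 1) * Rabs Y <= t ^ (2 * s - 1) * (eps * M * Cmod Q0)) by (apply Rmult_le_compat_l; lra).
      nra. }
    eapply Rle_lt_trans. apply H. apply Rmult_lt_compat_l; lra. }
  destruct (Hray t) as [Hp Hn]. lra. fold eps w in Hp, Hn.
  assert (H1 : Cmod (Cmult (RtoC eps) w) = eps * M) by (rewrite Cmod_mult, Cmod_R, Rabs_right by lra; reflexivity).
  assert (H2 : Cmod (Copp (Cmult (RtoC eps) w)) = eps * M) by (rewrite Cmod_opp; auto).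
  pose proof (Gen _ H1) as G1. pose proof (Gen _ H2) as G2.
  apply Rabs_def2 in G1. apply Rabs_def2 in G2.
  destruct (Rle_or_lt 0 B).
  - rewrite Rabs_right in G1, G2 by lra. nra.
  - rewrite Rabs_left in G1, G2 by lra. nra.
Qed.

Definition cis (x : R) : C := (cos x, sin x).

Lemma cis_mult a b : Cmult (cis a) (cis b) = cis (a + b).
Proof. unfold cis, Cmult. simpl. rewrite cos_plus, sin_plus. apply injective_projections; simpl; ring. Qed.

Lemma cis_pow a k : Cpow (cis a) k = cis (INR k * a).
Proof. induction k. simpl. unfold cis. rewrite Rmult_0_l, cos_0, sin_0. reflexivity.
  rewrite Cpow_S, IHk, cis_mult, S_INR. f_equal. ring. Qed.

Lemma cis_conj a : Cconj (cis a) = cis (- a).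
Proof. unfold cis, Cconj. simpl. rewrite cos_neg, sin_neg. reflexivity. Qed.

Lemma cis_2pi k : cis (2 * INR k * PI) = RtoC 1.
Proof. unfold cis. pose proof (cos_period 0 k). pose proof (sin_period 0 k).
  rewrite Rplus_0_l in H, H0. rewrite H, H0, cos_0, sin_0. reflexivity. Qed.

Lemma geom_sum r N : Cmult (Cminus r (RtoC 1)) (Csum N (fun j => Cpow r j)) = Cminus (Cpow r N) (RtoC 1).
Proof. induction N. simpl. ring. simpl Csum. rewrite Cmult_plus_distr_l, IHN. simpl. ring. Qed.

Lemma geom_zero r N : r <> RtoC 1 -> Cpow r N = RtoC 1 -> Csum N (fun j => Cpow r j) = RtoC 0.
Proof. intros H1 H2. pose proof (geom_sum r N) as G. rewrite H2 in G.
  replace (Cminus (RtoC 1) (RtoC 1)) with (RtoC 0) in G by ring.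
  assert (Hne : Cminus r (RtoC 1) <> RtoC 0).
  { intros G'. apply H1. replace r with (Cplus (Cminus r (RtoC 1)) (RtoC 1)) by ring. rewrite G'. ring. }
  replace (Csum N (fun j => Cpow r j)) with (Cmult (Cinv (Cminus r (RtoC 1))) (Cmult (Cminus r (RtoC 1)) (Csum N (fun j => Cpow r j)))).
  rewrite G. ring. field. auto. Qed.

Lemma cis_ne1 x : 0 < x < 2 * PI -> cis x <> RtoC 1.
Proof. intros Hx Heq. assert (Hc : fst (cis x) = fst (RtoC 1)) by (rewrite Heq; auto). simpl in Hc.
  replace x with (2 * (x / 2)) in Hc by field. rewrite cos_2a_sin in Hc.
  assert (0 < sin (x / 2)) by (apply sin_gt_0; lra). nra. Qed.

Lemma cis_ne1' x : 0 < x < 2 * PI -> cis (- x) <> RtoC 1.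
Proof. intros Hx Heq. apply (cis_ne1 x Hx). rewrite <- (Cconj_conj (cis x)), cis_conj, Heq.
  apply injective_projections; simpl; lra. Qed.

Lemma dft_inner d k l : (k <= d)%nat -> (l <= d)%nat ->
  Csum (S d) (fun j => cis (2 * (INR k - INR l) * (PI * INR j / INR (S d)))) =
  if Nat.eqb k l then RtoC (INR (S d)) else RtoC 0.
Proof. intros Hk Hl. assert (HN : 0 < INR (S d)) by (apply lt_0_INR; lia).
  set (beta := 2 * (INR k - INR l) * PI / INR (S d)).
  rewrite (Csum_ext _ _ (fun j => Cpow (cis beta) j)).
  2:{ intros j _. rewrite cis_pow. f_equal. unfold beta. field. lra. }
  destruct (Nat.eqb_spec k l).
  - subst. unfold beta. replace (2 * (INR l - INR l) * PI / INR (S d)) with 0 by (field; lra).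
    assert (Hc : cis 0 = RtoC 1) by (unfold cis; rewrite cos_0, sin_0; reflexivity).
    rewrite Hc. clear. induction d. simpl. ring. change (Csum (S (S d)) ?f) with (Cplus (Csum (S d) f) (f (S d))).
    rewrite IHd, Cpow_1_l. rewrite (S_INR (S d)), RtoC_plus. ring.
  - apply geom_zero.
    + pose proof PI_RGT_0.
      destruct (Nat.lt_ge_cases k l).
      * replace beta with (- (2 * PI * ((INR l - INR k) / INR (S d)))) by (unfold beta; field; lra).
        apply cis_ne1'. assert (INR k < INR l) by (apply lt_INR; auto).
        assert (INR l < INR (S d)) by (apply lt_INR; lia).
        assert (0 < (INR l - INR k) / INR (S d) < 1).
        { split. apply Rdiv_lt_0_compat; lra. apply Rmult_lt_reg_r with (INR (S d)); auto.
          unfold Rdiv. rewrite Rmult_assoc, Rinv_l by lra. pose proof (pos_INR k). lra. }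
        nra.
      * replace beta with (2 * PI * ((INR k - INR l) / INR (S d))) by (unfold beta; field; lra).
        apply cis_ne1. assert (INR l < INR k) by (apply lt_INR; lia).
        assert (INR k < INR (S d)) by (apply lt_INR; lia).
        assert (0 < (INR k - INR l) / INR (S d) < 1).
        { split. apply Rdiv_lt_0_compat; lra. apply Rmult_lt_reg_r with (INR (S d)); auto.
          unfold Rdiv. rewrite Rmult_assoc, Rinv_l by lra. pose proof (pos_INR l). lra. }
        nra.
    + rewrite cis_pow. unfold beta. replace (INR (S d) * (2 * (INR k - INR l) * PI / INR (S d))) with
        (2 * INR k * PI + - (2 * INR l * PI)) by (field; lra).
      rewrite <- cis_mult, <- cis_conj, !cis_2pi. apply injective_projections; simpl; lra.
Qed.

Lemma coef_zero d b : (forall z, Csum (S d) (fun k => Cmult (Cmult (b k) (Cpow z k)) (Cpow (Cconj z) (d - k))) = RtoC 0) ->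
  forall l, (l <= d)%nat -> b l = RtoC 0.
Proof. intros H l Hl. assert (HN : 0 < INR (S d)) by (apply lt_0_INR; lia).
  set (th := fun j => PI * INR j / INR (S d)).
  assert (E : Csum (S d) (fun j => Cmult (cis ((INR d - 2 * INR l) * th j))
     (Csum (S d) (fun k => Cmult (Cmult (b k) (Cpow (cis (th j)) k)) (Cpow (Cconj (cis (th j))) (d - k))))) = RtoC 0).
  { apply Csum_zero. intros j _. rewrite H. ring. }
  rewrite (Csum_ext _ _ (fun j => Csum (S d) (fun k => Cmult (b k) (cis (2 * (INR k - INR l) * (PI * INR j / INR (S d))))))) in E.
  2:{ intros j _. rewrite <- Csum_scal. apply Csum_ext. intros k Hk.
      rewrite cis_conj, !cis_pow. rewrite (Cmult_comm (cis _)), <- !Cmult_assoc, !cis_mult.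
      f_equal. f_equal. rewrite minus_INR by lia. unfold th. ring. }
  rewrite Csum_swap in E.
  rewrite (Csum_ext _ _ (fun k => if Nat.eqb k l then Cmult (RtoC (INR (S d))) (b l) else RtoC 0)) in E.
  2:{ intros k Hk. rewrite Csum_scal, dft_inner by lia. destruct (Nat.eqb_spec k l). subst; ring. ring. }
  rewrite Csum_delta in E by auto.
  replace (b l) with (Cmult (Cinv (RtoC (INR (S d)))) (Cmult (RtoC (INR (S d))) (b l))).
  rewrite E. ring. field. intros Hc. assert (Hf : fst (RtoC (INR (S d))) = fst (RtoC 0)) by (rewrite Hc; auto).
  unfold RtoC in Hf; cbn [fst] in Hf. lra.
Qed.

Lemma im_all d a : (1 <= d)%nat -> (forall z0, Cmod z0 = 1 -> Im (homp d a z0 (Cconj z0)) = 0) ->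
  forall z, Im (homp d a z (Cconj z)) = 0.
Proof. intros Hd H z. destruct (Req_dec (Cmod z) 0) as [Hz|Hz].
  - apply Cmod_eq_0 in Hz. subst z.
    replace (homp d a (RtoC 0) (Cconj (RtoC 0))) with (homp d a (Cmult (RtoC 0) (RtoC 1)) (Cmult (RtoC 0) (RtoC 1))).
    2:{ f_equal; apply injective_projections; simpl; lra. }
    rewrite homp_scale. destruct d. lia. simpl Cpow. rewrite Cmult_0_l, Cmult_0_l. reflexivity.
  - pose proof (Cmod_ge_0 z). set (r := Cmod z) in *.
    set (z0 := Cmult (RtoC (/ r)) z).
    assert (Hz0 : Cmod z0 = 1).
    { unfold z0. rewrite Cmod_mult, Cmod_R, Rabs_right. fold r. field. auto.
      apply Rle_ge, Rlt_le, Rinv_0_lt_compat; lra. }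
    assert (Ez : z = Cmult (RtoC r) z0).
    { unfold z0. rewrite Cmult_assoc, <- RtoC_mult, Rinv_r by auto. ring. }
    rewrite Ez, Cconj_RtoC_mult, homp_scale, <- RtoC_pow, im_scal_l, H by auto. ring.
Qed.

Lemma sym_from_real d a : (forall z, Im (homp d a z (Cconj z)) = 0) -> complex_symmetric d a.
Proof. intros H k Hk.
  set (b := fun k => Cminus (a k) (Cconj (a (d - k)%nat))).
  assert (Hb : forall z, Csum (S d) (fun k => Cmult (Cmult (b k) (Cpow z k)) (Cpow (Cconj z) (d - k))) = RtoC 0).
  { intros z. transitivity (Cminus (homp d a z (Cconj z)) (Cconj (homp d a z (Cconj z)))).
    - unfold homp. rewrite Csum_conj. rewrite (Csum_rev d (fun k => Cconj _)).
      rewrite <- Csum_minus. apply Csum_ext. intros j Hj. unfold b.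
      rewrite !Cmult_conj, !Cpow_conj, Cconj_conj. replace (d - (d - j))%nat with j by lia. ring.
    - rewrite im_alt', H. ring. }
  pose proof (coef_zero d b Hb k Hk). unfold b in H0.
  replace (a k) with (Cplus (Cminus (a k) (Cconj (a (d - k)%nat))) (Cconj (a (d - k)%nat))) by ring.
  rewrite H0. ring.
Qed.

Theorem mainTheorem4
  (g : C -> C) (m : R) (s n : nat) (c : nat -> nat -> C)
  (Hg_even : even_fun g)
  (Hg_C1 : C1_near0 g)
  (Hm : 1 < m)
  (Hg_hom : homogeneous_deg g m)
  (Hs : (1 <= s)%nat) (Hsn : (s <= n)%nat)
  (Hlead : exists k : nat, (k <= 2 * s - 1)%nat /\ c s k <> RtoC 0)
  (Hpc : polynomial_condition g (oddpoly s n c)) :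
  complex_symmetric (2 * s - 1)%nat (c s) /\
  forall z : C, Cmod z = 1 ->
    0 <= Im (Cmult (homp_d2 (2 * s - 1)%nat (c s) z (Cconj z)) (g z)).
Proof. split.
  - apply sym_from_real. apply im_all. lia. intros z0 Hz0. eapply part1a; eauto.
  - intros z Hz. eapply part2; eauto.
Qed.
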